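(* Let $X$ be a countably infinite set. The lattice $\mathrm{Cl}_{loc}(X)$ of local clones on $X$ does not embed (as a lattice) into the clone lattice $\mathrm{Cl}(A)$ over any finite set $A$.
   Context: For a set $Y$, a clone on $Y$ is a set of finitary operations on $Y$ containing all projections and closed under composition; $\mathrm{Cl}(Y)$ is the lattice of all clones on $Y$ ordered by inclusion. Giving $X$ the discrete topology and $X^{X^n}$ the product topology, a clone on $X$ is local if for each $n\ge1$ its set of $n$-ary operations is closed in $X^{X^n}$; equivalently, an $n$-ary operation $g$ belongs to the clone whenever for every finite $B\subseteq X^n$ some $n$-ary operation of the clone agrees with $g$ on $B$. $\mathrm{Cl}_{loc}(X)$ is the complete lattice of local clones on $X$ ordered by inclusion. A lattice embedding is an injective map preserving binary meets and joins. *)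

(* Defs.v *)
From mathcomp Require Import all_boot.
From Stdlib Require List.
Set Implicit Arguments. Unset Strict Implicit. Unset Printing Implicit Defensive.

Definition op (Y : Type) := {n : nat & ('I_n -> Y) -> Y}.

Definition opset (Y : Type) := op Y -> Prop.

Definition proj (Y : Type) (n : nat) (i : 'I_n) : op Y :=
  existT _ n (fun x => x i).

Definition is_clone (Y : Type) (C : opset Y) : Prop :=
  [/\ (forall o, C o -> 0 < projT1 o),
      (forall n (i : 'I_n), C (proj Y i)) &
      (forall n m (f : ('I_n -> Y) -> Y) (g : 'I_n -> ('I_m -> Y) -> Y),
          C (existT _ n f) -> (forall i, C (existT _ m (g i))) ->
          C (existT _ m (fun x => f (fun i => g i x))))].

(* Local clones: each n-ary part is closed in the product topology of
   X^(X^n), X discrete; i.e. an n-ary g belongs to C as soon as for every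
   finite B ⊆ X^n (given as a list) some n-ary member of C agrees with g on B. *)
Definition is_local_clone (X : Type) (C : opset X) : Prop :=
  is_clone C /\
  forall n (g : ('I_n -> X) -> X), 0 < n ->
    (forall B : seq ('I_n -> X),
        exists h, C (existT _ n h) /\ (forall x, List.In x B -> h x = g x)) ->
    C (existT _ n g).

Definition opset_meet (Y : Type) (C D : opset Y) : opset Y :=
  fun o => C o /\ D o.

Definition clone_join (Y : Type) (C D : opset Y) : opset Y :=
  fun o => forall E, is_clone E -> (forall p, C p -> E p) ->
                     (forall p, D p -> E p) -> E o.

Definition local_clone_join (Y : Type) (C D : opset Y) : opset Y :=
  fun o => forall E, is_local_clone E -> (forall p, C p -> E p) ->
                     (forall p, D p -> E p) -> E o.

Definition loc_lattice_embedding (X A : Type) (F : opset X -> opset A) : Prop :=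
  [/\ (forall C, is_local_clone C -> is_clone (F C)),
      (forall C D, is_local_clone C -> is_local_clone D -> F C = F D -> C = D),
      (forall C D, is_local_clone C -> is_local_clone D ->
          F (opset_meet C D) = opset_meet (F C) (F D)) &
      (forall C D, is_local_clone C -> is_local_clone D ->
          F (local_clone_join C D) = clone_join (F C) (F D))].

(* Main.v *)
Require Import Defs.
From mathcomp Require Import all_boot.
From Stdlib Require Import FunctionalExtensionality PropExtensionality ClassicalEpsilon Classical.
From Stdlib Require List.

Set Implicit Arguments. Unset Strict Implicit. Unset Printing Implicit Defensive.

Lemma opset_ext (Y : Type) (C D : opset Y) : (forall o, C o <-> D o) -> C = D.
Proof.
move=> H; apply: functional_extensionality => o.
by apply: propositional_extensionality.
Qed.

Definition locint (Y : Type) (Q : opset Y -> Prop) : opset Y :=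
  fun o => forall E, is_local_clone E -> Q E -> E o.

Definition topc (Y : Type) : opset Y := fun o => 0 < projT1 o.

Lemma topc_local (Y : Type) : is_local_clone (@topc Y).
Proof.
split; last by move=> n g Hn _.
split.
- by [].
- by move=> n [i Hi]; rewrite /topc /=; apply: leq_ltn_trans Hi.
- by move=> n m f g Hf Hg; exact: (Hg (Ordinal Hf)).
Qed.

Lemma locint_local (Y : Type) (Q : opset Y -> Prop) :
  Q (@topc Y) -> is_local_clone (locint Q).
Proof.
move=> HQ; split; first split.
- by move=> o Ho; exact: (Ho _ (topc_local Y) HQ).
- by move=> n i E [[_ HE _] _] _; exact: HE.
- move=> n m f g Hf Hg E HE QE; case: (HE) => [[_ _ HE3] _].
  apply: HE3; first exact: Hf. by move=> i; apply: Hg.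
- move=> n g Hn HB E HE QE; case: (HE) => [_ HE2]; apply: HE2 => // B.
  case: (HB B) => h [Hh1 Hh2]; exists h; split => //; exact: Hh1.
Qed.

Lemma meet_local (Y : Type) (C D : opset Y) :
  is_local_clone C -> is_local_clone D -> is_local_clone (opset_meet C D).
Proof.
move=> [[C1 C2 C3] C4] [[D1 D2 D3] D4]; split; first split.
- by move=> o [Ho _]; apply: C1.
- by move=> n i; split.
- move=> n m f g [Hf1 Hf2] Hg; split; [apply: C3|apply: D3] => // i; by case: (Hg i).
- move=> n g Hn HB; split; [apply: C4|apply: D4] => // B;
  case: (HB B) => h [[Hh1 Hh2] Hh3]; exists h; by split.
Qed.

Section Emb.
Variables (X A : Type) (F : opset X -> opset A).
Hypothesis HF : loc_lattice_embedding F.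

Lemma F_mono (C D : opset X) : is_local_clone C -> is_local_clone D ->
  (forall o, C o -> D o) -> forall o, F C o -> F D o.
Proof.
move=> HC HD sub o Ho.
case: HF => _ _ Hm _.
have E : opset_meet C D = C by apply: opset_ext => p; split; [case|move=> h; split; auto].
have := Hm C D HC HD; rewrite E => EF.
by move: Ho; rewrite {1}EF => -[].
Qed.
End Emb.

Inductive gen (Y : Type) (P : opset Y) : op Y -> Prop :=
| gen_base o : P o -> gen P o
| gen_proj n (i : 'I_n) : gen P (proj Y i)
| gen_comp n m (f : ('I_n -> Y) -> Y) (g : 'I_n -> ('I_m -> Y) -> Y) :
    gen P (existT _ n f) -> (forall i, gen P (existT _ m (g i))) ->
    gen P (existT _ m (fun x => f (fun i => g i x))).

Lemma gen_clone (Y : Type) (P : opset Y) : (forall o, P o -> 0 < projT1 o) ->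
  is_clone (gen P).
Proof.
move=> HP; split.
- move=> o; elim => //=.
  + by move=> n [i Hi]; apply: leq_ltn_trans Hi.
  + move=> n m f g _ IH1 _ IH2; exact: (IH2 (Ordinal IH1)).
- by move=> n i; apply: gen_proj.
- by move=> n m f g Hf Hg; apply: gen_comp.
Qed.

Lemma gen_min (Y : Type) (P E : opset Y) : is_clone E -> (forall o, P o -> E o) ->
  forall o, gen P o -> E o.
Proof.
move=> [_ E2 E3] HPE o; elim.
- by move=> p /HPE.
- by move=> n i; apply: E2.
- by move=> n m f g _ IH1 _ IH2; apply: E3.
Qed.

Lemma gen_mono (Y : Type) (P Q : opset Y) : (forall o, P o -> Q o) ->
  forall o, gen P o -> gen Q o.
Proof.
move=> H o; elim.
- by move=> p Hp; apply: gen_base; auto.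
- by move=> n i; apply: gen_proj.
- by move=> n m f g _ IH1 _ IH2; apply: gen_comp.
Qed.

Lemma In_enum (T : finType) (x : T) : List.In x (enum T).
Proof.
move: (mem_enum T x); elim: (enum T) => //= y s IH.
rewrite in_cons => /orP [/eqP ->|]; auto.
Qed.

Lemma gen_finite (Y : Type) (C D : opset Y) o :
  gen (fun p => C p \/ D p) o ->
  exists G : seq (op Y), (forall q, List.In q G -> D q) /\
     gen (fun p => C p \/ List.In p G) o.
Proof.
elim.
- move=> p [Cp|Dp].
  + exists [::]; split => //; apply: gen_base; by left.
  + exists [:: p]; split; first by move=> q /= [<-|].
    apply: gen_base; right; by left.
- by move=> n i; exists [::]; split => //; apply: gen_proj.
- move=> n m f g _ [G0 [HG0 HgG0]] _ IH2.
  pose Gs i := proj1_sig (constructive_indefinite_description _ (IH2 i)).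
  have HGs : forall i, (forall q, List.In q (Gs i) -> D q) /\
     gen (fun p => C p \/ List.In p (Gs i)) (existT _ m (g i)).
    by move=> i; rewrite /Gs; case: (constructive_indefinite_description _ _).
  exists (List.app G0 (List.concat (List.map Gs (enum 'I_n)))); split.
  + move=> q /List.in_app_iff [|/List.in_concat [l [/List.in_map_iff [i [<- _]] Hl]]].
    * exact: HG0.
    * by case: (HGs i) => H _; apply: H.
  + apply: gen_comp.
    * apply: gen_mono HgG0 => p [Cp|Hp]; [by left|right].
      apply/List.in_app_iff; by left.
    * move=> i; case: (HGs i) => _ H; apply: gen_mono H => p [Cp|Hp]; [by left|right].
      apply/List.in_app_iff; right; apply/List.in_concat; exists (Gs i); split => //.
      apply/List.in_map_iff; exists i; split => //; exact: In_enum.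
Qed.

Definition enc_op (A : finType) (o : op A) : nat :=
  let (n, f) := o in pickle (n, pickle [ffun x : {ffun 'I_n -> A} => f x]).

Lemma enc_op_inj (A : finType) : injective (@enc_op A).
Proof.
move=> [n f] [m g] /= /(pcan_inj pickleK) [enm].
subst m => /(pcan_inj pickleK) eff.
have H : forall x, f x = g x.
  move=> x.
  have Ex : (fun i => ([ffun i => x i] : {ffun 'I_n -> A}) i) = x.
    by apply: functional_extensionality => i; rewrite ffunE.
  move/ffunP/(_ [ffun i => x i]): eff; rewrite !ffunE.
  by move=> E0; rewrite -[in RHS]Ex -[in LHS]Ex.
by rewrite (functional_extensionality _ _ H).
Qed.

Lemma pigeon (P : (nat -> bool) -> nat -> Prop) :
  (forall a, exists c, P a c) -> exists a b c, a <> b /\ P a c /\ P b c.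
Proof.
move=> H; apply: NNPP => Hn.
pose c a := proj1_sig (constructive_indefinite_description _ (H a)).
have Hc : forall a, P a (c a).
  by move=> a; rewrite /c; case: (constructive_indefinite_description _ _).
have cinj : forall a b, c a = c b -> a = b.
  move=> a b E; apply: NNPP => Nab; apply: Hn; exists a, b, (c a); split => //.
  by split; [|rewrite E].
pose inv n : nat -> bool :=
  match excluded_middle_informative (exists a, c a = n) with
  | left h => proj1_sig (constructive_indefinite_description _ h)
  | right _ => fun _ => false end.
pose diag k := ~~ inv k k.
have Hinv : inv (c diag) = diag.
  rewrite /inv; case: (excluded_middle_informative _) => [h|h]; last first.
    by exfalso; apply: h; exists diag.
  case: (constructive_indefinite_description _ _) => a /= Ea; exact: cinj.
have E1 : diag (c diag) = inv (c diag) (c diag) by rewrite Hinv.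
move: E1; rewrite {1}/diag.
by case: (inv (c diag) (c diag)).
Qed.

Lemma first_diff (a b : nat -> bool) : a <> b ->
  exists j, mkseq a j = mkseq b j /\ mkseq a j.+1 <> mkseq b j.+1.
Proof.
move=> Nab.
have ex : exists j, a j != b j.
  apply: NNPP => H; apply: Nab; apply: functional_extensionality => j.
  apply/eqP; apply: negbNE; apply/negP => Hj; apply: H; by exists j.
case: (ex_minnP ex) => j Hj Hmin; exists j; split.
- apply/eq_in_map => i; rewrite mem_iota add0n => /andP [_ Hi].
  apply/eqP; apply: negbNE; apply/negP => Hab.
  by move: (Hmin i Hab); rewrite leqNgt Hi.
- move=> E; have := congr1 (fun s => nth false s j) E.
  rewrite !nth_mkseq // => Ej; by rewrite Ej eqxx in Hj.
Qed.

Definition Ycode (s : seq bool) := (pickle s).*2.+2.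
Definition Zcode (s : seq bool) := (pickle s).*2.+3.

Lemma Zcode_inj : injective Zcode.
Proof.
move=> s t; rewrite /Zcode => -[] /double_inj; exact: (pcan_inj pickleK).
Qed.


Definition dec : nat -> option (seq bool) := locked unpickle.
Lemma decK s : dec (pickle s) = Some s.
Proof. by rewrite /dec -lock pickleK. Qed.

Section Constr.
Variables (X : Type) (e : X -> nat) (d : nat -> X).
Hypothesis de : cancel d e.

Definition pres (R : X -> X -> Prop) (o : op X) : Prop :=
  forall x y : 'I_(projT1 o) -> X, (forall i, R (x i) (y i)) ->
    R (projT2 o x) (projT2 o y).

Definition Cpol (J : Type) (Rs : J -> X -> X -> Prop) : opset X :=
  fun o => 0 < projT1 o /\ forall j, pres (Rs j) o.

Lemma Cpol_local (J : Type) (Rs : J -> X -> X -> Prop) : is_local_clone (Cpol Rs).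
Proof.
split; first split.
- by move=> o [].
- move=> n i; split; first by case: i => /= i Hi; apply: leq_ltn_trans Hi.
  by move=> j x y /= H; apply: H.
- move=> n m f g [Hf1 Hf2] Hg; split; first by case: (Hg (Ordinal Hf1)).
  move=> j x y Hxy /=; apply: (Hf2 j (fun i => g i x) (fun i => g i y)) => i.
  by case: (Hg i) => _ H; apply: (H j x y Hxy).
- move=> n g Hn HB; split => // j x y Hxy /=.
  case: (HB [:: x; y]) => h [[_ Hh] Eh].
  rewrite -(Eh x) /=; last by left.
  rewrite -(Eh y) /=; last by right; left.
  exact: (Hh j x y Hxy).
Qed.

Definition Rel (a : nat -> bool) (m : nat) (x y : X) : Prop :=
  (e x = 0 /\ e y = Ycode (mkseq a m)) \/ (e x = 1 /\ e y = Zcode (mkseq a m.+1)).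

Definition R1 (u : unit) (x y : X) : Prop := e x = 0 /\ e y = 0.

Definition Ca (a : nat -> bool) : opset X := Cpol (Rel a).
Definition C1 : opset X := Cpol R1.

Definition gop : op X := existT _ 1 (fun _ => d 1).

Definition Kf (a : nat -> bool) (y : X) : X :=
  if e y <= 1 then d 1 else if odd (e y) then y else
  match dec (e y).-2./2 with
  | Some s => if s == mkseq a (size s) then d (Zcode (mkseq a (size s).+1)) else d 1
  | None => d 1 end.

Definition Hf (y : X) : X := if e y == 0 then y else d 1.

Lemma Kf_nz a y : e (Kf a y) != 0.
Proof.
rewrite /Kf; case: ifP => [_|]; first by rewrite de.
move=> Hy; case: ifP => [Ho|_].
  by apply/eqP => E; move: Hy; rewrite E.
case: (dec (e y).-2./2) => [s|] /=; last by rewrite de.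
case: ifP => _; rewrite de //.
Qed.

Lemma HK a y : Hf (Kf a y) = d 1.
Proof. by rewrite /Hf (negbTE (Kf_nz a y)). Qed.

Lemma Kf_pres a m : pres (Rel a m) (existT _ 1 (fun x => Kf a (x ord0))).
Proof.
move=> x y /(_ ord0); rewrite /=.
move: (x ord0) (y ord0) => x0 y0 [[Ex Ey]|[Ex Ey]].
- right; rewrite /Kf Ex /= de; split => //.
  rewrite Ey /Ycode /= odd_double /= doubleK decK size_mkseq eqxx de //.
- right; rewrite /Kf Ex /= de; split => //.
  rewrite Ey /Zcode /= odd_double /=; by [].
Qed.

Lemma meet_sub a b : a <> b -> forall o, opset_meet (Ca a) (Ca b) o -> C1 o.
Proof.
move=> Nab [n f] [[Hn Ha] [_ Hb]]; split => // u.
case: (first_diff Nab) => j [Ej Nj].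
have key : forall x : 'I_n -> X, (forall i, e (x i) = 0) -> e (f x) = 0.
  move=> x Hx.
  pose yv := fun _ : 'I_n => d (Ycode (mkseq a j)).
  have H1 := Ha j x yv (fun i => or_introl (conj (Hx i) (de _))).
  have H2 : Rel b j (f x) (f yv).
    apply: (Hb j x yv) => i; left; split => //; by rewrite /yv de Ej.
  case: H1 => [[-> _]|[_ Ey1]] //.
  case: H2 => [[-> _]|[_ Ey2]] //.
  by exfalso; apply: Nj; apply: Zcode_inj; rewrite -Ey1 -Ey2.
move=> x y Hxy; split; apply: key => i; by case: (Hxy i).
Qed.

End Constr.

Lemma join_local (Y : Type) (C D : opset Y) : is_clone C -> is_clone D ->
  is_local_clone (local_clone_join C D).
Proof.
move=> [HC _ _] [HD _ _].
have -> : local_clone_join C D =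
   locint (fun E => (forall p, C p -> E p) /\ (forall p, D p -> E p)).
  apply: opset_ext => o; split.
  - by move=> H E HE [H1 H2]; apply: H.
  - by move=> H E HE H1 H2; apply: H.
apply: locint_local; split => p; [exact: HC|exact: HD].
Qed.

Theorem corollary2p5 (X : Type) (e : X -> nat) (he : bijective e)
    (A : finType) :
  ~ exists F : opset X -> opset A, loc_lattice_embedding F.
Proof.
case: he => d ed de.
move=> [F HF]; have HF' := HF; case: HF' => Hcl Hinj Hmeet Hjoin.
pose C0 := locint (fun E : opset X => E (gop d)).
have L0 : is_local_clone C0 by apply: locint_local.
have L1 : is_local_clone (C1 e) by apply: Cpol_local.
have La : forall a, is_local_clone (Ca e a) by move=> a; apply: Cpol_local.
have g0 : C0 (gop d) by move=> E _.
have ng1 : ~ C1 e (gop d).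
  move=> [_ H]; have := H tt (fun _ => d 0) (fun _ => d 0).
  have h0 : forall i : 'I_1, R1 e tt (d 0) (d 0) by move=> i; rewrite /R1 de.
  by move=> /(_ h0) []; rewrite /= de.
have [f [Hf0 Hf1]] : exists f, F C0 f /\ ~ F (C1 e) f.
  apply: NNPP => Hn.
  have sub : forall f, F C0 f -> F (C1 e) f.
    by move=> f Hf; apply: NNPP => Hf'; apply: Hn; exists f.
  have E : opset_meet C0 (C1 e) = C0.
    apply: Hinj => //; first exact: meet_local.
    rewrite Hmeet //; apply: opset_ext => o; split; first by case.
    by move=> Ho; split => //; apply: sub.
  by apply: ng1; move: g0; rewrite -E => -[].
have step : forall a, exists c, exists G : seq (op A),
   pickle (map (@enc_op A) G) = c /\ (forall q, List.In q G -> F (Ca e a) q) /\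
   gen (fun p => F (C1 e) p \/ List.In p G) f.
  move=> a.
  have Lj : is_local_clone (local_clone_join (C1 e) (Ca e a)).
    apply: join_local; [case: L1|case: (La a)] => //.
  have Hsub : forall o, C0 o -> local_clone_join (C1 e) (Ca e a) o.
    move=> o Ho E HE H1 H2; apply: Ho => //.
    case: HE => [[_ _ E3] _].
    have Hh : E (existT _ 1 (fun x => Hf e d (x ord0))).
      apply: H1; split => // u x y Hxy; have := Hxy ord0.
      rewrite /R1 /Hf /= => -[E1 E2]; by rewrite E1 E2 /= E1 E2.
    have Hk : E (existT _ 1 (fun x => Kf e d a (x ord0))).
      apply: H2; split => // m; exact: Kf_pres.
    have := E3 1 1 _ (fun _ x => Kf e d a (x ord0)) Hh (fun _ => Hk).
    have -> : (fun x : 'I_1 -> X => Hf e d (Kf e d a (x ord0))) = (fun _ => d 1).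
      by apply: functional_extensionality => x; rewrite HK.
    by [].
  have := F_mono HF L0 Lj Hsub Hf0; rewrite Hjoin //.
  move=> Hj.
  have Hg : gen (fun p => F (C1 e) p \/ F (Ca e a) p) f.
    apply: Hj.
    - apply: gen_clone => o [Ho|Ho].
      + by case: (Hcl _ L1) => P _ _; apply: P.
      + by case: (Hcl _ (La a)) => P _ _; apply: P.
    - by move=> p Hp; apply: gen_base; left.
    - by move=> p Hp; apply: gen_base; right.
  case: (gen_finite Hg) => G [HG1 HG2].
  by exists (pickle (map (@enc_op A) G)), G.
case: (pigeon step) => a [b [c [Nab [[G1 [E1 [HG1 Hg1]]] [G2 [E2 [HG2 _]]]]]]].
have EG : G1 = G2.
  apply: (inj_map (@enc_op_inj A)); apply: (pcan_inj pickleK); by rewrite E1 E2.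
apply: Hf1; apply: (gen_min (Hcl _ L1) _ Hg1) => p [//|Hp].
have Hm : F (opset_meet (Ca e a) (Ca e b)) p.
  rewrite Hmeet //; split; [exact: HG1|apply: HG2; by rewrite -EG].
apply: (F_mono HF _ L1 _ Hm); first exact: meet_local.
exact: meet_sub.
Qed.
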